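(* Let $G=(V,E)$ be a graph and let $\mathcal{M}$ be a nontrivial, unbounded graph matroid family with dimensionality $d$ and threshold $t$, and rank function $r$. Let $k$ be an integer with $k\ge t$. If $\mathcal{M}(G)$ is vertically $(r(K_k)+2)$-connected, then $G$ is $(k+1)$-connected.
   Context: All graphs are finite and simple and have no isolated vertices. A graph matroid family $\mathcal{M}$ assigns to every graph $G$ a matroid $\mathcal{M}(G)$ on $E(G)$ such that (i) every graph isomorphism $V(G)\to V(H)$ induces an isomorphism $\mathcal{M}(G)\to\mathcal{M}(H)$, and (ii) for every subgraph $H$ of $G$, $\mathcal{M}(H)$ is the restriction of $\mathcal{M}(G)$ to $E(H)$. $r(G)$ is the rank of $\mathcal{M}(G)$. $\mathcal{M}$ is nontrivial if some graph $G$ has $r(G)<|E(G)|$, unbounded if $r(K_n)$ is unbounded. An $\mathcal{M}$-circuit is a graph $C$ with $r(C)<|E(C)|$ and $r(C-e)=|E(C)|-1$ for all edges $e$. Dimensionality $d$: minimum over $\mathcal{M}$-circuits of (minimum degree $-1$); threshold $t$: minimum of $|V(C)|-1$ over $\mathcal{M}$-circuits $C$ of minimum degree $d+1$. For a matroid with rank function $r$ on ground set $E$ and positive integer $k$, a bipartition $(E_1,E_2)$ of $E$ is a vertical $k$-separation if $r(E_1),r(E_2)\ge k$ and $r(E_1)+r(E_2)\le r(E)+k-1$; the matroid is vertically $k$-connected if its rank is at least $k$ and it has no vertical $k'$-separation for any positive integer $k'<k$. *)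

(* Defs.v *)
From mathcomp Require Import all_boot all_order.
Set Implicit Arguments. Unset Strict Implicit. Unset Printing Implicit Defensive.

(* A (finite, simple, without isolated vertices) graph on an ambient finite
   vertex type T is a set E of 2-element subsets of T; its vertex set is the
   union of its edges (so there are no isolated vertices). *)
Definition is_graph (T : finType) (E : {set {set T}}) : bool :=
  [forall e in E, #|e| == 2].

Definition verts (T : finType) (E : {set {set T}}) : {set T} :=
  \bigcup_(e in E) e.

Definition deg (T : finType) (E : {set {set T}}) (v : T) : nat :=
  #|[set e in E | v \in e]|.

Definition imE (T U : finType) (f : T -> U) (X : {set {set T}}) : {set {set U}} :=
  [set f @: e | e : {set T} in X].

Definition Kn (n : nat) : {set {set 'I_n}} := [set e : {set 'I_n} | #|e| == 2].

(* A graph matroid family is given by its rank functions: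
   M T E is the rank function of the matroid M(G) on E(G) = E. *)
Definition gm_family := forall T : finType, {set {set T}} -> {set {set T}} -> nat.

Definition is_matroid_rank (T : finType) (E : {set {set T}})
  (r : {set {set T}} -> nat) : Prop :=
  (forall X : {set {set T}}, X \subset E -> r X <= #|X|) /\
  (forall X Y : {set {set T}}, X \subset Y -> Y \subset E -> r X <= r Y) /\
  (forall X Y : {set {set T}}, X \subset E -> Y \subset E ->
     r (X :|: Y) + r (X :&: Y) <= r X + r Y).

Definition graph_matroid_family (M : gm_family) : Prop :=
  (forall (T : finType) (E : {set {set T}}), is_graph E -> is_matroid_rank E (M T E)) /\
  (forall (T U : finType) (E : {set {set T}}) (f : T -> U),
     is_graph E -> {in verts E &, injective f} ->
     forall X : {set {set T}}, X \subset E -> M U (imE f E) (imE f X) = M T E X) /\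
  (forall (T : finType) (E E' : {set {set T}}),
     is_graph E -> E' \subset E ->
     forall X : {set {set T}}, X \subset E' -> M T E' X = M T E X).

Definition rk (M : gm_family) (T : finType) (E : {set {set T}}) : nat := M T E E.

Definition rK (M : gm_family) (n : nat) : nat := rk M (Kn n).

Definition nontrivial (M : gm_family) : Prop :=
  exists (T : finType) (E : {set {set T}}), is_graph E /\ rk M E < #|E|.

Definition unbounded (M : gm_family) : Prop :=
  forall b : nat, exists n : nat, b < rK M n.

Definition is_circuit (M : gm_family) (T : finType) (E : {set {set T}}) : Prop :=
  is_graph E /\ rk M E < #|E| /\
  forall e : {set T}, e \in E -> rk M (E :\ e) = #|E| - 1.

Definition min_degree_is (T : finType) (E : {set {set T}}) (m : nat) : Prop :=
  (exists2 v : T, v \in verts E & deg E v = m) /\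
  (forall v : T, v \in verts E -> m <= deg E v).

Definition dimensionality (M : gm_family) (d : nat) : Prop :=
  (exists (T : finType) (C : {set {set T}}), is_circuit M C /\ min_degree_is C d.+1) /\
  (forall (T : finType) (C : {set {set T}}), is_circuit M C ->
     forall v : T, v \in verts C -> d.+1 <= deg C v).

Definition threshold (M : gm_family) (d t : nat) : Prop :=
  (exists (T : finType) (C : {set {set T}}),
     [/\ is_circuit M C, min_degree_is C d.+1 & #|verts C| = t.+1]) /\
  (forall (T : finType) (C : {set {set T}}),
     is_circuit M C -> min_degree_is C d.+1 -> t.+1 <= #|verts C|).

Definition vertical_sep (T : finType) (E : {set {set T}})
  (r : {set {set T}} -> nat) (k : nat) (E1 E2 : {set {set T}}) : Prop :=
  [/\ E1 :|: E2 = E, E1 :&: E2 = set0, k <= r E1, k <= r E2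
    & r E1 + r E2 <= r E + k - 1].

Definition vertically_connected (T : finType) (E : {set {set T}})
  (r : {set {set T}} -> nat) (k : nat) : Prop :=
  k <= r E /\
  forall k', 0 < k' -> k' < k -> ~ exists E1 E2 : {set {set T}}, vertical_sep E r k' E1 E2.

Definition adj_del (T : finType) (E : {set {set T}}) (X : {set T}) : rel T :=
  fun x y => [&& [set x; y] \in E, x \notin X & y \notin X].

Definition k_connected (T : finType) (E : {set {set T}}) (k : nat) : Prop :=
  k < #|verts E| /\
  forall X : {set T}, X \subset verts E -> #|X| < k ->
    forall u v : T, u \in verts E :\: X -> v \in verts E :\: X ->
      connect (adj_del E X) u v.

(* Main.v *)
Require Import Defs.
From mathcomp Require Import all_boot all_order.
From mathcomp Require Import zify.
Set Implicit Arguments. Unset Strict Implicit. Unset Printing Implicit Defensive.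

Lemma set_ind (T : finType) (P : {set T} -> Prop) :
  P set0 -> (forall (x : T) (A : {set T}), x \notin A -> P A -> P (x |: A)) -> forall A, P A.
Proof.
move=> P0 PS A; move: {2}#|A| (erefl #|A|) => n; elim: n A => [|n IH] A HA.
  by move/eqP: HA; rewrite cards_eq0 => /eqP ->.
have: 0 < #|A| by rewrite HA.
rewrite card_gt0 => /set0Pn [x xA].
rewrite -(setD1K xA); apply: PS; first by rewrite setD11.
apply: IH; move: HA; rewrite (cardsD1 x A) xA; lia.
Qed.

Lemma inj_into (A B : finType) (b0 : B) (S : {set A}) (R : {set B}) :
  #|S| <= #|R| ->
  exists f : A -> B, {in S &, injective f} /\ {in S, forall x, f x \in R}.
Proof.
move=> le.
have hi : forall x, x \in S -> index x (enum S) < size (enum R).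
  move=> x xS; rewrite -cardE; apply: leq_trans le; rewrite cardE index_mem mem_enum //.
exists (fun x => nth b0 (enum R) (index x (enum S))); split.
- move=> x y xS yS /eqP; rewrite nth_uniq ?enum_uniq ?hi // => /eqP Hi.
  rewrite -[x](nth_index x (s:=enum S)) ?mem_enum // Hi nth_index // mem_enum //.
- by move=> x xS; rewrite -mem_enum mem_nth ?hi.
Qed.

Definition KT (T : finType) : {set {set T}} := [set e : {set T} | #|e| == 2].
Arguments KT T : clear implicits.
Definition KY (T : finType) (Y : {set T}) : {set {set T}} := [set e in KT T | e \subset Y].
Definition star (T : finType) (z : T) (N : {set T}) : {set {set T}} := [set [set z; n] | n in N].

Section Mat.
Variable M : gm_family.
Hypothesis HM : graph_matroid_family M.
Variable T : finType.
Local Notation rho := (@M T (KT T)).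
Implicit Types (X Y A B E Z S C : {set {set T}}) (x e : {set T}).

Lemma KT_graph : is_graph (KT T).
Proof. by apply/forallP=> e; apply/implyP; rewrite inE. Qed.

Lemma rho_card X : X \subset (KT T) -> rho X <= #|X|.
Proof. by case: HM => [H _] /=; case: (H T (KT T) KT_graph) => H1 _; apply: H1. Qed.

Lemma rho_mono X Y : X \subset Y -> Y \subset (KT T) -> rho X <= rho Y.
Proof. by case: HM => [H _] /=; case: (H T (KT T) KT_graph) => _ [H2 _]; apply: H2. Qed.

Lemma rho_submod X Y : X \subset (KT T) -> Y \subset (KT T) ->
  rho (X :|: Y) + rho (X :&: Y) <= rho X + rho Y.
Proof. by case: HM => [H _] /=; case: (H T (KT T) KT_graph) => _ [_ H3]; apply: H3. Qed.

Lemma rho_restr E X : E \subset (KT T) -> X \subset E -> @M T E X = rho X.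
Proof. by case: HM => [_ [_ H]] EK XE; apply: H => //; exact: KT_graph. Qed.

Lemma rho0 : rho set0 = 0.
Proof. by apply/eqP; rewrite -leqn0 -(cards0 {set T}) rho_card ?sub0set. Qed.

Lemma rho_U A B : A \subset (KT T) -> B \subset (KT T) -> rho (A :|: B) <= rho A + #|B|.
Proof.
move=> AK BK; have := rho_submod AK BK; have := rho_card BK; lia.
Qed.

Lemma rho_U1 A x : A \subset (KT T) -> x \in (KT T) -> rho (x |: A) <= (rho A).+1.
Proof.
move=> AK xK; rewrite setUC; have := rho_U AK (_ : [set x] \subset (KT T)).
by rewrite cards1 addn1; apply; rewrite sub1set.
Qed.

Lemma cl_mono A B x : A \subset B -> B \subset (KT T) -> x \in (KT T) ->
  rho (x |: A) <= rho A -> rho (x |: B) <= rho B.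
Proof.
move=> AB BK xK H.
have AK : A \subset (KT T) by apply: subset_trans BK.
have xAK : x |: A \subset (KT T) by rewrite subUset sub1set xK.
have := rho_submod xAK BK.
have -> : (x |: A) :|: B = x |: B.
  by apply/setP=> y; rewrite !inE; case: (y == x) => //=; case yA: (y \in A) => //=; rewrite (subsetP AB).
have : rho A <= rho ((x |: A) :&: B).
  apply: rho_mono; last by apply: subset_trans (subsetIr _ _) BK.
  by rewrite subsetI subsetUr AB.
move=> h1 h2; set i := rho (_ :&: _) in h1 h2 *; lia.
Qed.

Lemma cl_many B Z : B \subset (KT T) -> Z \subset (KT T) ->
  (forall x, x \in Z -> rho (x |: B) <= rho B) -> rho (B :|: Z) <= rho B.
Proof.
move=> BK; elim/set_ind: Z => [|x Z xZ IH] ZK H; first by rewrite setU0.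
have ZK' : Z \subset (KT T) by apply: subset_trans ZK; apply: subsetUr.
have xK : x \in (KT T) by apply: (subsetP ZK); rewrite setU11.
have IH' := IH ZK' (fun y yZ => H y (setU1r _ yZ)).
have -> : B :|: (x |: Z) = x |: (B :|: Z) by rewrite setUCA.
apply: leq_trans IH'; apply: (cl_mono (A := B)) => //.
- exact: subsetUl.
- by rewrite subUset BK.
- by apply: H; rewrite setU11.
Qed.

Lemma lc_mono A (A' : {set {set T}}) B : A \subset A' -> A' \subset (KT T) -> B \subset (KT T) ->
  rho A + rho (A' :|: B) <= rho A' + rho (A :|: B).
Proof.
move=> AA' A'K BK.
have ABK : A :|: B \subset (KT T) by rewrite subUset BK (subset_trans AA').
have := rho_submod A'K ABK.
have -> : A' :|: (A :|: B) = A' :|: B by rewrite setUA (setUidPl AA').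
have : rho A <= rho (A' :&: (A :|: B)).
  by apply: rho_mono; [rewrite subsetI AA' subsetUl | apply: subset_trans (subsetIl _ _) A'K].
lia.
Qed.



Lemma coloop_ex A : A \subset (KT T) -> rho A < #|A| ->
  exists2 g, g \in A & rho A <= rho (A :\ g).
Proof.
move=> AK Hlt.
case: (boolP [exists g in A, rho A <= rho (A :\ g)]) => [/exists_inP [g gA Hg]|H].
  by exists g.
exfalso.
have Hall : forall g, g \in A -> rho (A :\ g) < rho A.
  by move=> g gA; rewrite ltnNge; apply/negP => Hg; move/negP: H; apply; apply/exists_inP; exists g.
suff: forall F : {set {set T}}, F \subset A -> rho (A :\: F) + #|F| <= rho A.
  by move/(_ A (subxx A)); rewrite setDv rho0 add0n leqNgt Hlt.
elim/set_ind => [|x F xF IH] FA; first by rewrite setD0 cards0 addn0.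
have xA : x \in A by apply: (subsetP FA); rewrite setU11.
have FA' : F \subset A by apply: subset_trans FA; apply: subsetUr.
have := IH FA'.
have K1 : A :\: F \subset (KT T) by apply: subset_trans (subsetDl _ _) AK.
have K2 : A :\ x \subset (KT T) by apply: subset_trans (subsetDl _ _) AK.
have := rho_submod K1 K2.
have -> : (A :\: F) :|: (A :\ x) = A.
  apply/setP=> y; rewrite !inE; case: (y =P x) => [->|]; first by rewrite xA xF.
  by case: (y \in A); rewrite ?andbF ?andbT ?orbT ?orbF.
have -> : (A :\: F) :&: (A :\ x) = A :\: (x |: F).
  apply/setP=> y; rewrite !inE; case: (y == x); case: (y \in F); case: (y \in A) => //.
have := Hall x xA.
rewrite cardsU1 xF /=.
move=> h1 h2 h3; set i := rho (_ :\: _) in h2 h3 *; lia.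
Qed.

Lemma circuit_ex S e : S \subset (KT T) -> e \in (KT T) -> e \notin S ->
  rho (e |: S) <= rho S ->
  exists C, [/\ C \subset e |: S, e \in C & is_circuit M C].
Proof.
move=> SK eK eS H.
have eSK : e |: S \subset (KT T) by rewrite subUset sub1set eK.
suff: forall n (C : {set {set T}}), #|C| <= n -> C \subset e |: S -> e \in C -> rho C <= rho (C :\ e) ->
   exists C', [/\ C' \subset C, e \in C' & is_circuit M C'].
  move/(_ #|e |: S| (e |: S) (leqnn _) (subxx _) (setU11 _ _)).
  rewrite setU1K //; move/(_ H) => [C' [h1 h2 h3]]; by exists C'.
elim=> [|n IH] C HC CS eC HCe.
  by move: HC; rewrite leqn0 cards_eq0 => /eqP C0; rewrite C0 inE in eC.
have CK : C \subset (KT T) by apply: subset_trans eSK.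
have sub_K : forall D : {set {set T}}, D \subset C -> D \subset (KT T) by move=> D DC; apply: subset_trans CK.
have cardCe : #|C| = #|C :\ e|.+1 by rewrite (cardsD1 e C) eC.
have rec : forall g, g \in C -> g != e -> rho (C :\ g) <= rho (C :\ g :\ e) ->
    exists C', [/\ C' \subset C, e \in C' & is_circuit M C'].
  move=> g gC ge Hg.
  have hc : #|C :\ g| <= n by move: HC; rewrite (cardsD1 g C) gC.
  have hs : C :\ g \subset e |: S by apply: subset_trans CS; apply: subsetDl.
  have he : e \in C :\ g by rewrite !inE eq_sym ge.
  have [C' [h1 h2 h3]] := IH (C :\ g) hc hs he Hg.
  by exists C'; split=> //; apply: subset_trans h1 (subsetDl _ _).
case: (ltnP (rho (C :\ e)) #|C :\ e|) => Hind.
  have [g gCe Hg] := coloop_ex (sub_K _ (subsetDl _ _)) Hind.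
  move: gCe; rewrite !inE => /andP [ge gC].
  apply: (rec g gC ge).
  have -> : C :\ g :\ e = C :\ e :\ g by rewrite setDDl setUC -setDDl.
  apply: leq_trans Hg.
  apply: leq_trans HCe; apply: rho_mono; [exact: subsetDl | exact: CK].
have Hce : rho (C :\ e) = #|C :\ e|.
  by apply/eqP; rewrite eqn_leq Hind rho_card // sub_K // subsetDl.
case: (boolP [exists g in C :\ e, rho (C :\ g) <= rho (C :\ g :\ e)]).
  move/exists_inP => [g]; rewrite !inE => /andP [ge gC] Hg.
  exact: (rec g gC ge Hg).
move=> Hno; exists C; split=> //.
have restrC : forall D : {set {set T}}, D \subset C -> @M T D D = rho D.
  by move=> D DC; apply: rho_restr; [exact: sub_K | exact: subxx].
split; first by apply/forallP=> x; apply/implyP=> xC; have := subsetP CK x xC; rewrite inE.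
split.
  by rewrite /rk restrC // (leq_ltn_trans HCe) // Hce cardCe.
move=> f fC; rewrite /rk restrC ?subsetDl //.
case: (f =P e) => [->|/eqP fe]; first by rewrite Hce cardCe subn1.
have Hf : rho (C :\ f :\ e) < rho (C :\ f).
  rewrite ltnNge; apply/negP => Hf; move/exists_inP: Hno; apply; exists f => //.
  by rewrite !inE fe.
apply/eqP; rewrite eqn_leq; apply/andP; split.
  rewrite (leq_trans (rho_card (sub_K _ (subsetDl _ _)))) //.
  by rewrite (cardsD1 f C) fC add1n subn1.
have : rho (C :\ e) <= (rho (C :\ e :\ f)).+1.
  have fCe : f \in C :\ e by rewrite !inE fe.
  rewrite -{1}(setD1K fCe); apply: rho_U1; last exact: (subsetP CK).
  by apply: sub_K; apply: subset_trans (subsetDl _ _) (subsetDl _ _).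
have -> : C :\ e :\ f = C :\ f :\ e by rewrite setDDl setUC -setDDl.
rewrite Hce cardCe.
move=> h; set i := rho (_ :\ _ :\ _) in h Hf *; lia.
Qed.

End Mat.

Lemma in_verts (T : finType) (E : {set {set T}}) e x : e \in E -> x \in e -> x \in verts E.
Proof. by move=> eE xe; apply/bigcupP; exists e. Qed.

Lemma two_el (T : finType) (e : {set T}) c : #|e| = 2 -> c \in e ->
  exists2 w, w != c & e = [set c; w].
Proof.
move=> /eqP /cards2P [a [b [ab ->]]]; rewrite !inE => /orP [] /eqP ->.
  by exists b; rewrite // eq_sym.
by exists a => //; rewrite setUC.
Qed.

Lemma set2_inj (T : finType) (c w1 w2 : T) : w1 != c -> [set c; w1] = [set c; w2] -> w1 = w2.
Proof.
move=> w1c E; have : w1 \in [set c; w2] by rewrite -E !inE eqxx orbT.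
by rewrite !inE (negbTE w1c) => /eqP.
Qed.

Lemma sub_card (T : finType) (A : {set T}) n : n <= #|A| -> exists2 B : {set T}, B \subset A & #|B| = n.
Proof.
elim: n => [|n IH] H; first by exists set0; rewrite ?sub0set ?cards0.
have [B BA cB] := IH (ltnW H).
have : B \proper A by rewrite properEcard BA cB H.
case/properP => _ [x xA xB]; exists (x |: B); first by rewrite subUset sub1set xA BA.
by rewrite cardsU1 xB cB.
Qed.

Lemma nbr_card (T : finType) (E : {set {set T}}) v : is_graph E ->
  #|[set w | [set v; w] \in E]| = deg E v.
Proof.
move=> gE; rewrite /deg.
have E2 : forall e, e \in E -> #|e| = 2 by move=> e eE; apply/eqP; move/forallP: gE => /(_ e); rewrite eE.
have -> : [set e in E | v \in e] = [set [set v; w] | w in [set w | [set v; w] \in E]].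
  apply/setP=> e; rewrite inE; apply/andP/imsetP.
    case=> eE ve; have [w wv ew] := two_el (E2 e eE) ve.
    by exists w => //; rewrite inE -ew.
  by case=> w; rewrite inE => wE ->; split=> //; rewrite !inE eqxx.
rewrite card_in_imset //.
move=> w1 w2; rewrite !inE => h1 h2; apply: set2_inj.
apply/negP => /eqP w1v; move: (E2 _ h1); rewrite w1v setUid cards1 //.
Qed.

Section Dim.
Variable M : gm_family.
Hypothesis HM : graph_matroid_family M.
Variable d : nat.
Hypothesis Hdeg : forall (T : finType) (C : {set {set T}}), is_circuit M C ->
  forall v, v \in verts C -> d.+1 <= deg C v.
Variable T : finType.
Local Notation rho := (@M T (KT T)).
Implicit Types (S E Z : {set {set T}}) (e N Y : {set T}) (z y n : T).

Lemma coloop S e z : S \subset KT T -> e \in KT T -> e \notin S -> z \in e ->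
  deg (e |: S) z <= d -> rho (e |: S) = (rho S).+1.
Proof.
move=> SK eK eS ze Hd; apply/eqP; rewrite eqn_leq rho_U1 //= ltnNge; apply/negP => H.
have [C [CS eC circ]] := circuit_ex HM SK eK eS H.
have := Hdeg circ (in_verts eC ze).
have : deg C z <= deg (e |: S) z.
  apply: subset_leq_card; apply/subsetP => f; rewrite !inE => /andP [fC ->]; rewrite andbT.
  by move: (subsetP CS f fC); rewrite !inE.
lia.
Qed.

Lemma star_sub z N : z \notin N -> star z N \subset KT T.
Proof.
move=> zN; apply/subsetP => e /imsetP [n nN ->]; rewrite inE cards2.
case: (z =P n) => [zn|//]; by move: zN; rewrite zn nN.
Qed.

Lemma lower S z N : S \subset KT T -> z \notin verts S -> z \notin N -> #|N| <= d ->
  rho (S :|: star z N) = rho S + #|N|.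
Proof.
move=> SK zS; elim/set_ind: N => [|n N nN IH] zN HN.
  by rewrite /star imset0 setU0 cards0 addn0.
have zN' : z \notin N by apply: contra zN; apply: setU1r.
have zn : z != n by apply/negP => /eqP zn; move: zN; rewrite zn setU11.
rewrite /star imsetU1 -/(star z N) setUCA (coloop (z := z)).
- by rewrite IH // ?cardsU1 ?nN ?addnS ?addn1 //; move: HN; rewrite cardsU1 nN; lia.
- by rewrite subUset SK star_sub.
- by rewrite inE cards2 zn.
- rewrite !inE negb_or; apply/andP; split.
    by apply/negP => H; move: zS; rewrite (in_verts H) // !inE eqxx.
  apply/negP => /imsetP [n' n'N] /(set2_inj (w1 := n)) E.
  have nz : n != z by rewrite eq_sym.
  by move: nN; rewrite (E nz) n'N.
- by rewrite !inE eqxx.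
- apply: leq_trans HN; apply: leq_trans (leq_imset_card (fun w => [set z; w]) _).
  apply: subset_leq_card; apply/subsetP => f; rewrite !inE => /andP [].
  case/or3P => [/eqP -> _|fS zf|fS _]; first by apply: imset_f; rewrite setU11.
    by move: zS; rewrite (in_verts fS zf).
  by move: fS => /imsetP [w wN ->]; apply: imset_f; rewrite setU1r.
Qed.

End Dim.

Lemma KY_sub (T : finType) (Y : {set T}) : KY Y \subset KT T.
Proof. by apply/subsetP => e; rewrite inE => /andP []. Qed.

Lemma verts_KY (T : finType) (Y : {set T}) x : x \in verts (KY Y) -> x \in Y.
Proof. by case/bigcupP => e; rewrite inE => /andP [_ eY] xe; apply: (subsetP eY). Qed.

Lemma KY_mono (T : finType) (Y Y' : {set T}) : Y \subset Y' -> KY Y \subset KY Y'.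
Proof.
move=> YY'; apply/subsetP => e; rewrite !inE => /andP [-> eY] /=; exact: subset_trans YY'.
Qed.

Section Thr.
Variable M : gm_family.
Hypothesis HM : graph_matroid_family M.
Variable d t : nat.
Hypothesis Hdeg : forall (T : finType) (C : {set {set T}}), is_circuit M C ->
  forall v, v \in verts C -> d.+1 <= deg C v.
Hypothesis Hthr : exists (T0 : finType) (C0 : {set {set T0}}),
  [/\ is_circuit M C0, min_degree_is C0 d.+1 & #|verts C0| = t.+1].

Lemma d_lt_t : d < t.
Proof.
case: Hthr => T0 [C0 [circ [[c cV dc] _] cV0]].
have gC0 : is_graph C0 by case: circ.
have := nbr_card c gC0; rewrite dc => <-.
have <- : #|verts C0 :\ c| = t by move: cV0; rewrite (cardsD1 c) cV; case.
apply: subset_leq_card; apply/subsetP => w; rewrite !inE => wE.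
apply/andP; split; last by apply: (in_verts wE); rewrite !inE eqxx orbT.
apply/negP => /eqP wc; move/forallP: gC0 => /(_ _); move/(_ [set c; w]).
by rewrite wE wc setUid cards1.
Qed.

Variable T : finType.
Local Notation rho := (@M T (KT T)).

Lemma clique_ext (Y N : {set T}) (z y : T) : t <= #|Y| -> z \notin Y -> N \subset Y ->
  #|N| = d -> y \in Y -> y \notin N ->
  rho ([set z; y] |: (KY Y :|: star z N)) <= rho (KY Y :|: star z N).
Proof.
move=> tY zY NsY cN yY yN.
case: Hthr => T0 [C0 [circ [[c cV dc] _] cV0]].
have gC0 : is_graph C0 by case: circ.
have E2 : forall e, e \in C0 -> #|e| = 2.
  by move=> e eC; apply/eqP; move/forallP: gC0 => /(_ e); rewrite eC.
set V0 := verts C0.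
set Nc := [set w | [set c; w] \in C0].
have cNc : #|Nc| = d.+1 by rewrite nbr_card.
have cnNc : c \notin Nc.
  by rewrite inE; apply/negP => /E2; rewrite setUid cards1.
have NcV : Nc \subset V0 :\ c.
  apply/subsetP => w wN; rewrite !inE; apply/andP; split.
    by apply/negP => /eqP wc; move: cnNc; rewrite -wc wN.
  by apply: (in_verts (_ : [set c; w] \in C0)); rewrite ?inE ?eqxx ?orbT //; move: wN; rewrite inE.
set R0 := (V0 :\ c) :\: Nc.
have cV0c : #|V0 :\ c| = t by move: cV0; rewrite (cardsD1 c) cV; case.
have cR0 : #|R0| + d.+1 = t.
  rewrite /R0 cardsD (setIidPr NcV) cNc; have := subset_leq_card NcV; rewrite cNc cV0c; lia.
set NY := y |: N.
have cNY : #|NY| = d.+1 by rewrite cardsU1 yN cN.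
have NYY : NY \subset Y by rewrite subUset sub1set yY NsY.
set RY := Y :\: NY.
have cRY : #|RY| = #|Y| - d.+1 by rewrite cardsD (setIidPr NYY) cNY.
have [f1 [f1i f1N]] := inj_into z (S := Nc) (R := NY) (eq_leq (etrans cNc (esym cNY))).
have hR : #|R0| <= #|RY| by rewrite cRY; lia.
have [f2 [f2i f2R]] := inj_into z (S := R0) (R := RY) hR.
pose f x := if x == c then z else if x \in Nc then f1 x else f2 x.
have fc : f c = z by rewrite /f eqxx.
have fN : forall x, x \in Nc -> f x = f1 x.
  move=> x xN; rewrite /f xN; case: (x =P c) => // xc; by move: cnNc; rewrite -xc xN.
have fR : forall x, x \in R0 -> f x = f2 x.
  by move=> x; rewrite /f !inE => /and3P [/negbTE -> /negbTE -> _].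
have zNY : z \notin NY by apply: contra zY; apply: (subsetP NYY).
have zRY : z \notin RY by rewrite inE negb_and zY orbT.
have NYRY : forall a, a \in NY -> a \notin RY by move=> a aN; rewrite inE aN.
have Vcase : forall x, x \in V0 -> [\/ x = c, x \in Nc | x \in R0].
  move=> x xV; case: (x =P c) => [->|/eqP xc]; first by constructor 1.
  case xN: (x \in Nc); first by constructor 2.
  by constructor 3; rewrite /R0 in_setD xN in_setD1 xc xV.
have fY : forall x, x \in V0 -> x != c -> f x \in Y.
  move=> x xV xc; case: (Vcase x xV) => [xc'|xN|xR]; first by rewrite xc' eqxx in xc.
    by rewrite fN // (subsetP NYY) // f1N.
  by rewrite fR //; move: (f2R x xR); rewrite inE => /andP [].
have finj : {in V0 &, injective f}.
  move=> x x' xV x'V; case: (Vcase x xV) => [->|xN|xR]; case: (Vcase x' x'V) => [->|x'N|x'R] // E.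
  - by move: (f1N x' x'N); rewrite -fN // -E fc (negbTE zNY).
  - by move: (f2R x' x'R); rewrite -fR // -E fc (negbTE zRY).
  - by move: (f1N x xN); rewrite -fN // E fc (negbTE zNY).
  - by apply: f1i; rewrite // -!fN.
  - by move: (NYRY _ (f1N x xN)); rewrite -fN // E fR // f2R.
  - by move: (f2R x xR); rewrite -fR // E fc (negbTE zRY).
  - by move: (NYRY _ (f1N x' x'N)); rewrite -fN // -E fR // f2R.
  - by apply: f2i; rewrite // -!fR.
have eV : forall e, e \in C0 -> e \subset V0.
  by move=> e eC; apply/subsetP => x xe; apply: in_verts xe.
have eK : forall e, e \in C0 -> f @: e \in KT T.
  move=> e eC; rewrite inE card_in_imset ?E2 //.
  by move=> x x' xe x'e; apply: finj; apply: (subsetP (eV e eC)).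
have iso := (proj1 (proj2 HM)) T0 T C0 f gC0 finj.
have imK : imE f C0 \subset KT T by apply/subsetP => _ /imsetP [e eC ->]; exact: eK.
have rhoX : forall X : {set {set T0}}, X \subset C0 -> rho (imE f X) = M C0 X.
  move=> X XC; rewrite -(rho_restr HM imK (imsetS _ XC)); exact: iso.
have f1Nc : f1 @: Nc = NY.
  apply/eqP; rewrite eqEcard card_in_imset // cNc cNY leqnn andbT.
  by apply/subsetP => _ /imsetP [w wN ->]; exact: f1N.
have [c' c'N fc'] : exists2 c', c' \in Nc & y = f1 c'.
  by apply/imsetP; rewrite f1Nc setU11.
set e0 := [set c; c'].
have e0C : e0 \in C0 by move: c'N; rewrite inE.
have fe0 : f @: e0 = [set z; y] by rewrite imsetU1 imset_set1 fc fN // -fc'.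
have Hr : rho (imE f C0) <= rho (imE f (C0 :\ e0)).
  rewrite !rhoX ?subsetDl //.
  case: circ => _ [Hlt Hcd]; have := Hcd e0 e0C; rewrite /rk.
  rewrite ((proj2 (proj2 HM)) T0 C0 (C0 :\ e0) gC0 (subsetDl _ _) _ (subxx _)).
  move=> ->; move: Hlt; rewrite /rk; move: (M C0 C0) => a; clear; lia.
have imD : imE f C0 = [set z; y] |: imE f (C0 :\ e0).
  by rewrite -{1}(setD1K e0C) /imE imsetU1 fe0.
have zN : z \notin N by apply: contra zY; apply: (subsetP NsY).
have sub : imE f (C0 :\ e0) \subset KY Y :|: star z N.
  apply/subsetP => _ /imsetP [e eC ->]; move: eC; rewrite !inE => /andP [ee0 eC].
  case: (boolP (c \in e)) => ce.
    have [w wc ew] := two_el (E2 e eC) ce.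
    have wN : w \in Nc by rewrite inE -ew.
    have wc' : w != c' by apply/negP => /eqP wc'; move: ee0; rewrite ew wc' eqxx.
    have fwN : f1 w \in N.
      move: (f1N w wN); rewrite !inE; case/orP => // /eqP fy.
      by move: wc'; rewrite (f1i w c' wN c'N (etrans fy fc')) eqxx.
    apply/orP; right; rewrite ew imsetU1 imset_set1 fc fN //.
    by apply: imset_f.
  apply/orP; left; move: (eK e eC); rewrite inE => -> /=.
  apply/subsetP => _ /imsetP [x xe ->]; apply: fY; first by apply: in_verts xe.
  by apply/negP => /eqP xc; move: ce; rewrite -xc xe.
apply: (cl_mono HM sub).
- by rewrite subUset KY_sub star_sub.
- rewrite inE cards2; case: (z =P y) => [zy|//]; by move: zY; rewrite zy yY.
- by rewrite -imD.
Qed.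

End Thr.

Section Thr2.
Variable M : gm_family.
Hypothesis HM : graph_matroid_family M.
Variable d t : nat.
Hypothesis Hdeg : forall (T : finType) (C : {set {set T}}), is_circuit M C ->
  forall v, v \in verts C -> d.+1 <= deg C v.
Hypothesis Hthr : exists (T0 : finType) (C0 : {set {set T0}}),
  [/\ is_circuit M C0, min_degree_is C0 d.+1 & #|verts C0| = t.+1].
Variable T : finType.
Local Notation rho := (@M T (KT T)).

Lemma upper (Y Z : {set T}) : t <= #|Y| -> (forall z, z \in Z -> z \notin Y) ->
  rho (KY (Y :|: Z)) <= rho (KY Y) + d * #|Z|.
Proof.
move=> tY; elim/set_ind: Z => [|z Z zZ IH] HZ; first by rewrite setU0 cards0 muln0 addn0.
have IH' := IH (fun w wZ => HZ w (setU1r _ wZ)).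
set Y' := Y :|: Z.
have tY' : t <= #|Y'| by apply: leq_trans tY _; apply: subset_leq_card; apply: subsetUl.
have dlt := d_lt_t Hthr.
have [N NY' cN] := sub_card (A := Y') (n := d) (ltnW (leq_trans dlt tY')).
have zY' : z \notin Y'.
  by rewrite inE negb_or HZ ?setU11 // zZ.
have zN : z \notin N by apply: contra zY'; apply: (subsetP NY').
set B := KY Y' :|: star z N.
have BK : B \subset KT T by rewrite subUset KY_sub star_sub.
have SK : star z (Y' :\: N) \subset KT T.
  by apply: star_sub; rewrite inE negb_and zY' orbT.
have keysub : KY (Y :|: (z |: Z)) \subset B :|: star z (Y' :\: N).
  apply/subsetP => e; rewrite inE => /andP [eK eY].
  case: (boolP (z \in e)) => ze.
    have e2 : #|e| = 2 by apply/eqP; move: eK; rewrite inE.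
    have [w wz ew] := two_el e2 ze.
    have wY' : w \in Y'.
      have : w \in Y :|: (z |: Z) by apply: (subsetP eY); rewrite ew !inE eqxx orbT.
      by rewrite !inE (negbTE wz) /=.
    case: (boolP (w \in N)) => wN.
      by rewrite !inE; apply/orP; left; apply/orP; right; rewrite ew; apply: imset_f.
    by rewrite inE; apply/orP; right; rewrite ew; apply: imset_f; rewrite inE wN.
  rewrite !inE; apply/orP; left; apply/orP; left; apply/andP; split; first by move: eK; rewrite inE.
  apply/subsetP => x xe; have := subsetP eY x xe; rewrite /Y' !inE.
  by case: (x =P z) => [xz|_] //=; move: ze; rewrite -xz xe.
have H1 : rho (KY (Y :|: (z |: Z))) <= rho B.
  have BSK : B :|: star z (Y' :\: N) \subset KT T by rewrite subUset BK SK.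
  apply: leq_trans (rho_mono HM keysub BSK) _.
  apply: (cl_many HM BK SK) => x /imsetP [w]; rewrite inE => /andP [wN wY'] ->.
  exact: (clique_ext HM Hthr (Y := Y') (N := N)).
have H2 : rho B <= rho (KY Y') + d.
  apply: leq_trans (rho_U HM (KY_sub _) (star_sub zN)) _.
  by rewrite leq_add2l -cN leq_imset_card.
rewrite cardsU1 zZ mulnS.
move: H1 H2 IH'; rewrite -/Y'; move: (rho (KY Y')) (rho B) (rho (KY Y)) => a b c.
clear; lia.
Qed.

Lemma lowerZ (S : {set {set T}}) (Z N : {set T}) : S \subset KT T ->
  (forall z, z \in Z -> z \notin verts S) -> (forall z, z \in Z -> z \notin N) -> #|N| <= d ->
  rho S + #|N| * #|Z| <= rho (S :|: \bigcup_(z in Z) star z N).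
Proof.
move=> SK; elim/set_ind: Z => [|z Z zZ IH] HS HN dN.
  by rewrite big_set0 setU0 cards0 muln0 addn0.
have IH' := IH (fun w wZ => HS w (setU1r _ wZ)) (fun w wZ => HN w (setU1r _ wZ)) dN.
rewrite big_setU1 //= setUCA (setUC (star z N)).
have zN : z \notin N by apply: HN; rewrite setU11.
have BK : \bigcup_(w in Z) star w N \subset KT T.
  apply/bigcupsP => w wZ; apply: star_sub; apply: HN; exact: setU1r.
have S'K : S :|: (\bigcup_(w in Z) star w N) \subset KT T by rewrite subUset BK SK.
rewrite (lower HM Hdeg S'K) //.
  rewrite cardsU1 zZ mulnS; move: IH'.
  move: (rho (S :|: \bigcup_(w in Z) star w N)) (rho S) => a b; clear; lia.
apply/negP => /bigcupP [f]; rewrite in_setU => /orP [fS|/bigcupP [w wZ /imsetP [n nN ->]]] zf.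
  by move: (HS z (setU11 _ _)); rewrite (in_verts fS zf).
move: zf; rewrite !inE => /orP [/eqP zw|/eqP zn].
  by move: zZ; rewrite zw wZ.
by move: zN; rewrite zn nN.
Qed.

Lemma modular (A B : {set T}) : t <= #|A :&: B| ->
  rho (KY A) + rho (KY B) <= rho (KY A :|: KY B) + rho (KY (A :&: B)).
Proof.
move=> tY.
set Y := A :&: B; set Z := A :\: B.
have AYZ : A = Y :|: Z by rewrite /Y /Z setID.
have H1 : rho (KY A) <= rho (KY Y) + d * #|Z|.
  rewrite {1}AYZ; apply: upper => // z; rewrite !inE => /andP [zB _]; rewrite negb_and zB.
  by rewrite orbT.
have dlt := d_lt_t Hthr.
have [N NY cN] := sub_card (A := Y) (n := d) (ltnW (leq_trans dlt tY)).
have H2 : rho (KY B) + #|N| * #|Z| <= rho (KY B :|: \bigcup_(z in Z) star z N).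
  apply: lowerZ; first exact: KY_sub.
  - move=> z; rewrite inE => /andP [zB _]; apply/negP => /verts_KY; exact/negP.
  - move=> z; rewrite inE => /andP [zB _]; apply/negP => zN.
    by move: (subsetP NY z zN); rewrite inE (negbTE zB) andbF.
  - by rewrite cN.
have H3 : rho (KY B :|: \bigcup_(z in Z) star z N) <= rho (KY A :|: KY B).
  apply: (rho_mono HM); last by rewrite subUset !KY_sub.
  rewrite (setUC (KY A)); apply: setUS; apply/bigcupsP => z zZ; apply/subsetP => _ /imsetP [n nN ->].
  have nA : n \in A by move: (subsetP NY n nN); rewrite inE => /andP [].
  have zA : z \in A by move: zZ; rewrite inE => /andP [].
  rewrite inE; apply/andP; split.
    rewrite inE cards2; case: (z =P n) => [zn|//]; move: zZ; rewrite zn inE.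
    by move: (subsetP NY n nN); rewrite inE => /andP [_ ->].
  by rewrite subUset !sub1set zA nA.
move: H1 H2 H3; rewrite cN mulnC.
move: (rho (KY A)) (rho (KY B)) (rho (KY A :|: KY B)) (rho (KY Y)) (rho (KY B :|: \bigcup_(z in Z) star z N)).
move=> a b c e g; clear; lia.
Qed.

Lemma sep_key (A B : {set T}) e u (E2 : {set {set T}}) : 0 < d -> t <= #|A :&: B| ->
  e \in KY A -> u \in e -> u \notin B -> E2 \subset KY B -> rho (e |: E2) <= rho E2 -> False.
Proof.
move=> d0 tY eA ue uB E2B H.
set Y := A :&: B.
have eK : e \in KT T by move: eA; rewrite inE => /andP [].
have h1 : rho (e |: KY B) <= rho (KY B) := cl_mono HM E2B (KY_sub _) eK H.
have KYYA : KY Y \subset KY A by apply: KY_mono; apply: subsetIl.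
have KYYB : KY Y \subset KY B by apply: KY_mono; apply: subsetIr.
have eYA : e |: KY Y \subset KY A by rewrite subUset sub1set eA KYYA.
have h2 := lc_mono HM eYA (KY_sub A) (KY_sub B).
have eq1 : (e |: KY Y) :|: KY B = e |: KY B by rewrite -setUA (setUidPr KYYB).
rewrite eq1 in h2.
have h3 := modular tY.
have eY : e \notin KY Y.
  rewrite inE negb_and; apply/orP; right; apply/negP => /subsetP /(_ u ue).
  by rewrite inE (negbTE uB) andbF.
have h4 : rho (e |: KY Y) = (rho (KY Y)).+1.
  apply: (coloop HM Hdeg (z := u)) => //; first exact: KY_sub.
  apply: leq_trans d0; rewrite /deg -(cards1 e); apply: subset_leq_card.
  apply/subsetP => f; rewrite !inE => /andP [/orP [-> //|fY] uf].
  by move: fY => /andP [_ /subsetP /(_ u uf)]; rewrite /Y inE (negbTE uB) andbF.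
move: h1 h2 h3 h4; rewrite -/Y.
move: (rho (e |: KY B)) (rho (KY B)) (rho (e |: KY Y)) (rho (KY A :|: KY B)) (rho (KY A)) (rho (KY Y)).
move=> a b c g h i; clear; lia.
Qed.

End Thr2.

Section Iso.
Variable M : gm_family.
Hypothesis HM : graph_matroid_family M.

Lemma rK0 : rK M 0 = 0.
Proof.
apply/eqP; rewrite -leqn0.
have : #|Kn 0| = 0.
  apply/eqP; rewrite cards_eq0; apply/eqP/setP => e; rewrite !inE.
  by have := max_card (mem e); rewrite card_ord leqn0 => /eqP ->.
move=> h0; rewrite -[X in _ <= X]h0; exact: (rho_card HM (subxx (KT 'I_0))).
Qed.

Lemma rK_KY (T : finType) (Y : {set T}) : rK M #|Y| = @M T (KT T) (KY Y).
Proof.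
case: (set_0Vmem Y) => [->|[y0 y0Y]].
  rewrite cards0 rK0 (_ : KY set0 = set0) ?rho0 //.
  apply/setP => e; rewrite !inE; apply/negP => /andP [e2 /subset_leq_card].
  by rewrite cards0 leqn0 (eqP e2).
set n := #|Y|.
have cT : #|[set: 'I_n]| <= #|Y| by rewrite cardsT card_ord.
have [f [fi fY]] := inj_into y0 cT.
have finj : injective f by move=> i j; apply: fi; rewrite inE.
have fim : f @: [set: 'I_n] = Y.
  apply/eqP; rewrite eqEcard card_in_imset // cardsT card_ord leqnn andbT.
  by apply/subsetP => _ /imsetP [i iT ->]; apply: fY.
have imK : imE f (Kn n) = KY Y.
  apply/setP => e; apply/imsetP/idP.
    case=> e' e'K ->; rewrite !inE card_in_imset; last by move=> a b _ _; apply: finj.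
    move: e'K; rewrite inE => -> /=; rewrite -fim; apply: imsetS; exact: subsetT.
  rewrite !inE => /andP [/cards2P [a [b [ab ->]]] abY].
  have : a \in f @: [set: 'I_n] by rewrite fim (subsetP abY) // !inE eqxx.
  case/imsetP => i _ ai.
  have : b \in f @: [set: 'I_n] by rewrite fim (subsetP abY) // !inE eqxx orbT.
  case/imsetP => j _ bj; subst a b.
  exists [set i; j]; last by rewrite imsetU1 imset_set1.
  rewrite inE cards2; case: (i =P j) ab => [->|//]; by rewrite eqxx.
have iso := (proj1 (proj2 HM)) 'I_n T (Kn n) f (KT_graph 'I_n) (fun a b _ _ => @finj a b) (Kn n) (subxx _).
rewrite imK in iso.
rewrite /rK /rk -iso; exact: (rho_restr HM (KY_sub Y) (subxx _)).
Qed.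

Lemma rK_mono a b : a <= b -> rK M a <= rK M b.
Proof.
move=> ab; have hb : a <= #|[set: 'I_b]| by rewrite cardsT card_ord.
have [Y _ cY] := sub_card hb.
rewrite -cY rK_KY; apply: (rho_mono HM (KY_sub Y) (subxx _)).
Qed.

Lemma rk_le (T : finType) (G : {set {set T}}) n : is_graph G -> #|verts G| <= n ->
  @M T (KT T) G <= rK M n.
Proof.
move=> gG Wn; apply: leq_trans (rK_mono Wn); rewrite rK_KY.
apply: (rho_mono HM) (KY_sub _); apply/subsetP => e eG; rewrite !inE.
move/forallP: gG => /(_ e); rewrite eG /= => -> /=.
by apply/subsetP => x xe; apply: in_verts xe.
Qed.

End Iso.

Section Fin.
Variable M : gm_family.
Hypothesis HM : graph_matroid_family M.
Variable d t : nat.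
Hypothesis Hdeg : forall (T : finType) (C : {set {set T}}), is_circuit M C ->
  forall v, v \in verts C -> d.+1 <= deg C v.
Hypothesis Hthr : exists (T0 : finType) (C0 : {set {set T0}}),
  [/\ is_circuit M C0, min_degree_is C0 d.+1 & #|verts C0| = t.+1].

Lemma d_pos : unbounded M -> 0 < d.
Proof.
move=> Hunb; rewrite lt0n; apply/negP => /eqP d0.
have step : forall n, t <= n -> rK M n.+1 <= rK M n.
  move=> n tn.
  pose Y : {set 'I_n.+1} := [set~ ord_max].
  have cY : #|Y| = n by rewrite cardsC1 card_ord.
  have tY : t <= #|Y| by rewrite cY.
  have HZ : forall z, z \in [set (@ord_max n)] -> z \notin Y.
    by move=> z; rewrite !inE => /eqP ->; rewrite eqxx.
  have := upper HM Hthr tY HZ.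
  rewrite d0 mul0n addn0.
  have -> : Y :|: [set ord_max] = setT by rewrite setUC setUCr.
  have -> : KY [set: 'I_n.+1] = KT 'I_n.+1.
    by apply/setP => e; rewrite !inE subsetT andbT.
  have e1 := rK_KY HM Y; rewrite cY in e1; rewrite e1.
  by [].
have bound : forall n, rK M n <= rK M t.
  move=> n; case: (leqP n t) => [|tn]; first exact: rK_mono.
  elim: n tn => [//|n IH] tn.
  apply: leq_trans (step n _) _; first by move: tn; rewrite ltnS.
  case: (ltnP t n) => tn'; first exact: IH.
  have -> : n = t by apply/eqP; rewrite eqn_leq tn'; move: tn; rewrite ltnS.
  exact: leqnn.
by case: (Hunb (rK M t)) => n; rewrite ltnNge bound.
Qed.

Variable T : finType.
Local Notation rho := (@M T (KT T)).

Lemma KY_lower (Y : {set T}) : 0 < d -> #|Y| <= (rho (KY Y)).+1.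
Proof.
move=> d0; elim/set_ind: Y => [|y Y yY IH]; first by rewrite cards0.
case: (set_0Vmem Y) => [Y0|[y0 y0Y]]; first by rewrite Y0 setU0 cards1.
have yy0 : y \notin [set y0] by rewrite inE; apply/negP => /eqP E; move: yY; rewrite E y0Y.
have yV : y \notin verts (KY Y) by apply/negP => /verts_KY; apply/negP.
have c1 : #|[set y0]| <= d by rewrite cards1.
have := lower HM Hdeg (KY_sub Y) yV yy0 c1.
rewrite cards1 => E.
have sub : KY Y :|: star y [set y0] \subset KY (y |: Y).
  rewrite subUset KY_mono ?subsetUr //; apply/subsetP => x /imsetP [w]; rewrite inE => /eqP -> ->.
  rewrite inE; apply/andP; split; first by rewrite inE cards2; case: (y =P y0) => [yw|//]; move: yy0; rewrite yw inE eqxx.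
  by rewrite subUset !sub1set !inE eqxx y0Y orbT.
have := rho_mono HM sub (KY_sub _).
rewrite E cardsU1 yY; move: IH; move: (rho (KY Y)) (rho (KY (y |: Y))) => a b; clear; lia.
Qed.

End Fin.

Theorem proposition3p5 (M : gm_family) (d t : nat) (k : nat)
  (T : finType) (G : {set {set T}}) :
  graph_matroid_family M -> nontrivial M -> unbounded M ->
  dimensionality M d -> threshold M d t ->
  is_graph G -> t <= k ->
  vertically_connected G (M T G) (rK M k + 2) ->
  k_connected G k.+1.
Proof.
move=> HM _ Hunb [_ Hdeg] [Hthr _] gG tk [Hm Hsep].
have d0 : 0 < d := d_pos HM Hthr Hunb.
have GK : G \subset KT T.
  by apply/subsetP => e eG; rewrite inE; move/forallP: gG => /(_ e); rewrite eG.
have req : forall X : {set {set T}}, X \subset G -> M T G X = M T (KT T) X.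
  by move=> X XG; exact: (rho_restr HM GK XG).
rewrite req // in Hm.
have noSep : forall E1 : {set {set T}}, E1 \subset G ->
    M T (KT T) (G :\: E1) < M T (KT T) G -> M T (KT T) E1 < M T (KT T) G ->
    M T (KT T) E1 + M T (KT T) (G :\: E1) <= M T (KT T) G + rK M k -> False.
  move=> E1 E1G h2 h1 hl.
  have E2G : G :\: E1 \subset G by apply: subsetDl.
  have hsub := rho_submod HM (subset_trans E1G GK) (subset_trans E2G GK).
  have U : E1 :|: (G :\: E1) = G.
    apply/setP => x; rewrite !inE; case xE: (x \in E1) => //=.
    by rewrite (subsetP E1G).
  have I : E1 :&: (G :\: E1) = set0.
    by apply/setP => x; rewrite !inE; case: (x \in E1); rewrite ?andbF.
  rewrite U I (rho0 HM) in hsub.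
  have h0 : M T (KT T) E1 + M T (KT T) (G :\: E1) - M T (KT T) G < rK M k + 1.
    by move: hl; clear; lia.
  apply: (Hsep (M T (KT T) E1 + M T (KT T) (G :\: E1) - M T (KT T) G).+1) => //.
    by move: h0; clear; lia.
  exists E1, (G :\: E1); split => //; rewrite ?req //.
  - by move: h2 hsub; clear; lia.
  - by move: h1 hsub; clear; lia.
  - by clear; lia.
have Eq2 : forall e, e \in G -> #|e| = 2.
  by move=> e eG; apply/eqP; move/forallP: gG => /(_ e); rewrite eG.
have part1 : k.+1 < #|verts G|.
  rewrite ltnNge; apply/negP => HW.
  case: (leqP #|verts G| k) => HWk.
    have := rk_le HM gG HWk; move: Hm; clear; lia.
  have cW : #|verts G| = k.+1 by apply/eqP; rewrite eqn_leq HW HWk.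
  have : 0 < #|verts G| by rewrite cW.
  rewrite card_gt0 => /set0Pn [u uW].
  set W := verts G in cW uW.
  set E1 := [set e in G | u \in e].
  set Y := W :\ u.
  have cY : #|Y| = k by move: cW; rewrite (cardsD1 u W) uW add1n; case.
  have rKY := rK_KY HM Y; rewrite cY in rKY.
  have E1G : E1 \subset G by apply/subsetP => e; rewrite inE => /andP [].
  have h2 : M T (KT T) (G :\: E1) <= rK M k.
    rewrite rKY; apply: (rho_mono HM) (KY_sub _); apply/subsetP => e.
    rewrite !inE negb_and => /andP [/orP [eG1|ue] eG]; first by rewrite eG in eG1.
    rewrite Eq2 // eqxx /=; apply/subsetP => x xe; rewrite !inE.
    rewrite (in_verts eG xe) andbT; apply/negP => /eqP xu; by move: ue; rewrite -xu xe.
  have h1 : M T (KT T) E1 <= k.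
    apply: leq_trans (rho_card HM (subset_trans E1G GK)) _.
    rewrite -cY; apply: leq_trans (leq_imset_card (fun w => [set u; w]) Y).
    apply: subset_leq_card; apply/subsetP => e; rewrite inE => /andP [eG ue].
    have [w wu ew] := two_el (Eq2 e eG) ue.
    rewrite ew; apply: imset_f; rewrite !inE wu /=.
    by apply: (in_verts eG); rewrite ew !inE eqxx orbT.
  have hK := KY_lower HM Hdeg Y d0; rewrite cY -rKY in hK.
  have h3 : M T (KT T) E1 <= M T (KT T) G by apply: (rho_mono HM E1G GK).
  apply: (noSep E1 E1G).
  - by move: h2 Hm; clear; lia.
  - by move: h1 hK Hm; clear; lia.
  - by move: h2 h3; clear; lia.
split => //.
move=> X XW cX u v; rewrite !inE => /andP [uX uW] /andP [vX vW].
case: (boolP (connect (adj_del G X) u v)) => // Hnc; exfalso.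
set W := verts G in XW uW vW part1.
have uv : u != v by apply/negP => /eqP uv; move: Hnc; rewrite uv connect0.
set C := [set w | connect (adj_del G X) u w].
have uC : u \in C by rewrite inE connect0.
have vC : v \notin C by rewrite inE.
have clX : closed (adj_del G X) [pred x | x \notin X].
  by move=> x y; rewrite /adj_del => /and3P [_ hx hy]; rewrite !inE hx hy.
have CX : forall w, w \in C -> w \notin X.
  move=> w; rewrite inE => /(closed_connect clX); rewrite !inE uX => <-; done.
have edgeC : forall e a, e \in G -> a \in e -> a \in C -> e \subset C :|: X.
  move=> e a eG ae aC; have [b ba eb] := two_el (Eq2 e eG) ae.
  apply/subsetP => x; rewrite eb !inE => /orP [/eqP ->|/eqP ->]; first by move: aC; rewrite inE => ->.
  case bX: (b \in X); first by rewrite orbT.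
  rewrite orbF; apply: connect_trans (_ : connect _ u a) _; first by move: aC; rewrite inE.
  by apply: connect1; rewrite /adj_del -eb eG CX //= bX.
set E1 := [set e in G | [exists w in e, w \in C]].
set E2 := G :\: E1.
have E1G : E1 \subset G by apply/subsetP => e; rewrite inE => /andP [].
have V1 : verts E1 \subset C :|: X.
  apply/bigcupsP => e; rewrite inE => /andP [eG /exists_inP [w we wC]].
  exact: edgeC eG we wC.
have V2 : forall x, x \in verts E2 -> x \notin C.
  move=> x /bigcupP [e]; rewrite !inE => /andP [eE1 eG] xe; apply/negP => xC.
  by move: eE1; rewrite eG /= => /negP; apply; apply/exists_inP; exists x; rewrite // inE.
have vW' : v \in W :\ u by rewrite !inE eq_sym uv vW.
have XWuv : X \subset W :\ u :\ v.
  apply/subsetP => x xX; rewrite !inE (subsetP XW) // andbT.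
  by apply/andP; split; apply/negP => /eqP xe; [move: vX | move: uX]; rewrite -xe xX.
have cWuv : #|W :\ u :\ v| = #|W| - 2.
  by move: (cardsD1 u W) (cardsD1 v (W :\ u)); rewrite uW vW'; clear; lia.
have hB : k - #|X| <= #|W :\ u :\ v :\: X|.
  rewrite cardsD (setIidPr XWuv) cWuv; move: part1; clear; lia.
have [B0 B0s cB0] := sub_card hB.
set Y := X :|: B0.
have cY : #|Y| = k.
  rewrite cardsU cB0 (_ : X :&: B0 = set0) ?cards0.
    by move: cX; clear; lia.
  apply/setP => x; rewrite !inE; apply/negP => /andP [xX xB].
  by move: (subsetP B0s x xB); rewrite !inE xX.
have uY : u \notin Y.
  rewrite !inE negb_or uX /=; apply/negP => /(subsetP B0s); rewrite !inE eqxx.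
  by rewrite !andbF.
have vY : v \notin Y.
  rewrite !inE negb_or vX /=; apply/negP => /(subsetP B0s); rewrite !inE eqxx.
  by rewrite /= andbF.
have XY : X \subset Y by apply: subsetUl.
clearbody Y.
set A := verts E1 :|: Y.
set B := verts E2 :|: Y.
have AB : A :&: B = Y.
  apply/setP => x; rewrite !inE; case xY: (x \in Y); first by rewrite !orbT.
  rewrite !orbF; apply/negP => /andP [x1 x2].
  move: (subsetP V1 x x1); rewrite inE (negbTE (V2 x x2)) /= => xX.
  by move: xY; rewrite (subsetP XY).
have tY : t <= #|A :&: B| by rewrite AB cY.
have tY' : t <= #|B :&: A| by rewrite setIC AB cY.
have E1A : E1 \subset KY A.
  apply/subsetP => e eE; rewrite inE (subsetP GK) ?(subsetP E1G) //=.
  by apply/subsetP => x xe; rewrite inE (in_verts eE xe).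
have E2B : E2 \subset KY B.
  apply/subsetP => e eE; rewrite inE (subsetP GK) ?(subsetP (subsetDl G E1)) //=.
  by apply/subsetP => x xe; rewrite inE (in_verts eE xe).
have E2G : E2 \subset G by apply: subsetDl.
have [eu euG ueu] : exists2 e, e \in G & u \in e by move/bigcupP: uW => [e eG ue]; exists e.
have [ev evG vev] : exists2 e, e \in G & v \in e by move/bigcupP: vW => [e eG ve]; exists e.
have euE1 : eu \in E1 by rewrite inE euG; apply/exists_inP; exists u.
have evE2 : ev \in E2.
  rewrite inE evG andbT inE evG /=; apply/negP => /exists_inP [w wev wC].
  by move: (subsetP (edgeC ev w evG wev wC) v vev); rewrite inE (negbTE vC) (negbTE vX).
have uB : u \notin B.
  rewrite inE negb_or uY andbT; apply/negP => /V2; by rewrite uC.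
have vA : v \notin A.
  rewrite inE negb_or vY andbT; apply/negP => /(subsetP V1); by rewrite inE (negbTE vC) (negbTE vX).
have h2 : M T (KT T) E2 < M T (KT T) G.
  rewrite ltnNge; apply/negP => H.
  apply: (sep_key HM Hdeg Hthr d0 tY (subsetP E1A _ euE1) ueu uB E2B).
  apply: leq_trans H; apply: (rho_mono HM) GK.
  by rewrite subUset sub1set euG E2G.
have h1 : M T (KT T) E1 < M T (KT T) G.
  rewrite ltnNge; apply/negP => H.
  apply: (sep_key HM Hdeg Hthr d0 tY' (subsetP E2B _ evE2) vev vA E1A).
  apply: leq_trans H; apply: (rho_mono HM) GK.
  by rewrite subUset sub1set evG E1G.
have E2K : E2 \subset KT T by apply: subset_trans E2G GK.
have l1 := lc_mono HM E1A (KY_sub A) E2K.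
have l2 := lc_mono HM E2B (KY_sub B) (KY_sub A).
have m := modular HM Hdeg Hthr tY.
have U : E1 :|: E2 = G.
  apply/setP => x; rewrite in_setU /E2 in_setD; case xE: (x \in E1) => /=; last by [].
  by rewrite (subsetP E1G).
rewrite U in l1; rewrite (setUC (KY B)) (setUC E2) in l2.
have rKY := rK_KY HM Y; rewrite cY in rKY; rewrite AB -rKY in m.
apply: (noSep E1 E1G h2 h1).
move: l1 l2 m.
move: (M T (KT T) E1) (M T (KT T) E2) (M T (KT T) G) (M T (KT T) (KY A)) (M T (KT T) (KY B)).
move: (M T (KT T) (KY A :|: E2)) (M T (KT T) (KY A :|: KY B)) (rK M k).
by move=> a b c e f g h i; clear; lia.
Qed.
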